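(* There is a function $\varepsilon:\mathbb{N}\to[0,\infty)$ with $\varepsilon(n)\to 0$ as $n\to\infty$ such that the following holds for every positive integer $n$. Let $\mathcal{S}\subseteq 2^{[n]}$ be a family of subsets of $[n]=\{1,\dots,n\}$. Suppose that for every $n$-element poset $(P,\preceq_P)$ there is an enumeration $v_1,\dots,v_n$ of the elements of $P$ such that for each $j\in[n]$, $$\{i\in[n]\mid v_i\preceq_P v_j\}\in\mathcal{S}.$$ Then $|\mathcal{S}|\geq 2^{(1-\varepsilon(n))n}$. *)

(* Defs.v *)
From Stdlib Require Import Reals.
From mathcomp Require Import all_boot.
Set Implicit Arguments. Unset Strict Implicit. Unset Printing Implicit Defensive.

Definition is_partial_order (T : Type) (le : rel T) : Prop :=
  reflexive le /\ antisymmetric le /\ transitive le.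

Definition realizes_all_posets (n : nat) (S : {set {set 'I_n}}) : Prop :=
  forall (T : finType) (le : rel T),
    #|T| = n -> is_partial_order le ->
    exists v : 'I_n -> T, bijective v /\
      forall j : 'I_n, [set i : 'I_n | le (v i) (v j)] \in S.

(* Main.v *)
Require Import Defs.
From Stdlib Require Import Reals Lra.
From mathcomp Require Import all_boot zify.
Set Implicit Arguments. Unset Strict Implicit. Unset Printing Implicit Defensive.
Delimit Scope R_scope with Re.


Section C.
Variables (m r : nat) (F : {set 'I_m * 'I_r}).
Definition T := ('I_m + 'I_r)%type.
Definition leF (x y : T) : bool :=
  match x, y with
  | inl a, inl a' => a == a'
  | inr k, inr k' => k == k'
  | inl a, inr k => (a, k) \in F
  | inr _, inl _ => false
  end.
Lemma leF_po : is_partial_order leF.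
Proof.
split; first by case=> x /=.
split.
  case=> [a|k] [b|l] /=; rewrite ?andbF //; by case/andP=> /eqP ->.
case=> [a|k] [b|l] [c|o] //=; by [move=> /eqP-> | move=> H /eqP<- | move=> /eqP-> /eqP-> | move=> H /eqP <-].
Qed.
End C.

Definition decode (m r n : nat) (p : {ffun 'I_n -> T m r} * {ffun 'I_r -> {set 'I_n}}) :
  {set 'I_m * 'I_r} :=
  [set q | [exists i, (p.1 i == inl q.1) && (i \in p.2 q.2)]].

Lemma comb (n m r : nat) (S : {set {set 'I_n}}) :
  m + r = n -> realizes_all_posets S -> 2 ^ (m * r) <= n ^ n * #|S| ^ r.
Proof.
move=> Hn HS.
pose D := setX [set: {ffun 'I_n -> T m r}] [set g : {ffun 'I_r -> {set 'I_n}} | g \in ffun_on (mem S)].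
have cardT : #|{: T m r}| = n by rewrite card_sum !card_ord.
have -> : n ^ n * #|S| ^ r = #|D|.
  by rewrite cardsX cardsT card_ffun cardT card_ord; congr (_ * _);
     rewrite cardsE card_ffun_on card_ord.
have -> : 2 ^ (m * r) = #|powerset [set: 'I_m * 'I_r]|.
  by rewrite card_powerset cardsT card_prod !card_ord.
apply: leq_trans (leq_imset_card (decode (n:=n)) D).
apply: subset_leq_card; apply/subsetP=> F _.
have [v [bv Hv]] := HS _ (leF F) cardT (leF_po F).
case: bv => w vw wv.
pose g := [ffun k => [set i | leF F (v i) (inr k)]].
apply/imsetP; exists ([ffun i => v i], g).
  rewrite in_setX in_setT /= inE; apply/ffun_onP => k.
  have := Hv (w (inr k)); rewrite wv ffunE; done.
apply/setP=> [[a k]]; rewrite inE; apply/idP/existsP => [Hak|[i /andP[/eqP e]]].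
  by exists (w (inl a)); rewrite /= !ffunE wv eqxx inE /= wv.
by rewrite /= ffunE in e; rewrite /= ffunE inE e.
Qed.

Definition ell (n : nat) : nat := (trunc_log 2 n).+1.
Definition KK (n : nat) : nat := Nat.sqrt (n %/ ell n).
Definition epsf (n : nat) : R := (2 / INR (maxn 1 (KK n)))%Re.

Lemma ell_gt0 n : 0 < ell n. Proof. by []. Qed.

Lemma ellKK n : ell n * (KK n * KK n) <= n.
Proof.
have H1 : KK n * KK n <= n %/ ell n.
  by apply/leP; have [] := Nat.sqrt_spec (n %/ ell n) (Nat.le_0_l _).
have H2 := leq_divM n (ell n).
rewrite leq_divRL // in H1. lia.
Qed.

Lemma growth4 c : (2 * c).+1 * c <= 2 ^ (2 * c).
Proof.
elim: c => // c IH.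
have -> : 2 * c.+1 = (2 * c).+2 by lia.
rewrite !expnS. nia.
Qed.

Lemma growth c t : 2 * c <= t -> t.+1 * c <= 2 ^ t.
Proof.
move=> Ht; have [d ->] : exists d, t = 2 * c + d by exists (t - 2 * c); lia.
elim: d => [|d IH]; first by rewrite addn0 growth4.
rewrite addnS expnS. nia.
Qed.

Lemma KK_large k n : 2 ^ (2 * (k * k)) <= n -> k <= KK n.
Proof.
move=> Hn.
have n0 : 0 < n by apply: leq_trans Hn; rewrite expn_gt0.
have Ht : 2 * (k * k) <= trunc_log 2 n by apply: trunc_log_max.
have H1 := growth Ht.
have H2 := trunc_logP (isT : 1 < 2) n0.
have H3 : k * k <= n %/ ell n by rewrite leq_divRL //= /ell; lia.
rewrite /KK -{1}(Nat.sqrt_square k); apply/leP; apply: Nat.sqrt_le_mono; exact/leP.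
Qed.

Lemma natbound n (S : {set {set 'I_n}}) : 0 < KK n -> realizes_all_posets S ->
  2 ^ (ell n * KK n * n) <= 2 ^ (2 * ell n * n) * #|S| ^ (ell n * KK n).
Proof.
move=> K0 HS.
set l := ell n; set K := KK n.
have E := ellKK n; rewrite -/l -/K in E.
have rn : l * K <= n by nia.
have C := comb (subnK rn) HS.
have nn : n ^ n <= 2 ^ (l * n).
  rewrite /l; case: n {S HS C E rn K K0 l} => // n'.
  rewrite expnM leq_exp2r //; exact: ltnW (trunc_log_ltn _ _).
have E2 : l * K * n <= (n - l * K) * (l * K) + l * n.
  have : l * (l * (K * K)) <= l * n by rewrite leq_mul2l E orbT.
  rewrite mulnBl; nia.
apply: leq_trans (leq_pexp2l (isT : 0 < 2) E2) _.
rewrite expnD mulnC.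
have -> : 2 * l * n = l * n + l * n by lia.
rewrite expnD -mulnA leq_mul2l; apply/orP; right.
apply: leq_trans C _; rewrite leq_mul2r nn orbT //.
Qed.

Lemma INR_expn a b : INR (a ^ b) = (INR a ^ b)%Re.
Proof. elim: b => [|b IH]; first by rewrite expn0. by rewrite expnS mult_INR IH. Qed.

Lemma pow_lt_l (a b : R) (r : nat) : (0 <= a)%Re -> (a < b)%Re -> 0 < r -> (a ^ r < b ^ r)%Re.
Proof.
move=> a0 ab; elim: r => // r IH _.
case: r IH => [|r] IH; first by rewrite /= !Rmult_1_r.
have := IH isT => h.
rewrite /= -/(pow a r.+1) -/(pow b r.+1).
apply: Rle_lt_trans (_ : (a * b ^ r.+1 < b * b ^ r.+1)%Re).
  apply: Rmult_le_compat_l => //; exact: Rlt_le.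
apply: Rmult_lt_compat_r => //; apply: pow_lt; lra.
Qed.

Lemma S_nonempty n (S : {set {set 'I_n}}) : 0 < n -> realizes_all_posets S -> 0 < #|S|.
Proof.
move=> n0 HS.
have cardT : #|{: T n 0}| = n by rewrite card_sum !card_ord addn0.
have [v [_ Hv]] := HS _ (leF set0) cardT (leF_po set0).
apply/card_gt0P; exists [set i | leF set0 (v i) (v (Ordinal n0))]; exact: Hv.
Qed.

Theorem proposition4p1 :
  exists eps : nat -> R,
    (forall n : nat, Rle 0 (eps n)) /\ Un_cv eps R0 /\
    forall (n : nat) (S : {set {set 'I_n}}),
      (0 < n)%N -> realizes_all_posets S ->
      Rle (Rpower (INR 2) (Rmult (Rminus (INR 1) (eps n)) (INR n))) (INR #|S|).
Proof.
exists epsf; split; [|split].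
- move=> n; rewrite /epsf; apply: Rlt_le; apply: Rdiv_lt_0_compat; first lra.
  apply: lt_0_INR; apply/ltP; rewrite leq_max //.
- move=> d d0.
  have [k Hk] := INR_archimed d 2 d0.
  have k0 : (0 < k)%N.
    case: k Hk => //=; lra.
  exists (2 ^ (2 * (k * k))) => n /leP Hn.
  have Kk := KK_large Hn.
  rewrite /R_dist Rminus_0_r /epsf.
  have M : (INR k <= INR (maxn 1 (KK n)))%Re.
    apply: le_INR; apply/leP; rewrite leq_max Kk orbT //.
  have kp : (0 < INR k)%Re by apply: lt_0_INR; apply/ltP.
  rewrite Rabs_right; last first.
    apply: Rle_ge; apply: Rlt_le; apply: Rdiv_lt_0_compat; lra.
  apply: Rle_lt_trans (_ : (2 / INR k < d)%Re).
    apply: Rmult_le_compat_l; first lra.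
    apply: Rinv_le_contravar => //.
  apply/(Rmult_lt_reg_r (INR k)) => //.
  rewrite /Rdiv Rmult_assoc Rinv_l; lra.
- move=> n S n0 HS.
  have s0 := S_nonempty n0 HS.
  have two : INR 2 = 2%Re by rewrite /=; lra.
  rewrite two.
  case: (posnP (KK n)) => K0.
  + rewrite /epsf K0 /=.
    apply: Rle_trans (_ : (Rpower 2 0 <= _)%Re).
      apply: Rle_Rpower; first lra.
      have := pos_INR n; rewrite /=; lra.
    rewrite Rpower_O; last lra.
    have := le_INR 1 #|S| (elimT leP s0); rewrite /=; lra.
  + set x := ((INR 1 - epsf n) * INR n)%Re.
    set r := ell n * KK n.
    have r0 : 0 < r by rewrite muln_gt0 K0.
    have NB := natbound K0 HS.
    have NBR := le_INR _ _ (elimT leP NB).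
    rewrite mult_INR !INR_expn two in NBR.
    have Kp : (0 < INR (KK n))%Re by apply: lt_0_INR; apply/ltP.
    have xr : (x * INR r = INR (ell n * KK n * n) - INR (2 * ell n * n))%Re.
      rewrite /x /epsf /r !mult_INR (maxn_idPr K0) /=.
      field; lra.
    have P2 : forall m, Rpower 2 (INR m) = (2 ^ m)%Re by move=> m; apply: Rpower_pow; lra.
    have Y : (Rpower 2 x ^ r <= INR #|S| ^ r)%Re.
      rewrite -Rpower_pow; last by apply: exp_pos.
      rewrite Rpower_mult xr /Rminus Rpower_plus Rpower_Ropp !P2.
      have h : (0 < 2 ^ (2 * ell n * n))%Re by apply: pow_lt; lra.
      apply/(Rmult_le_reg_r (2 ^ (2 * ell n * n))) => //.
      rewrite Rmult_assoc Rinv_l; last lra.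
      rewrite Rmult_1_r Rmult_comm //.
    apply: Rnot_lt_le => H.
    have := @pow_lt_l _ _ r (pos_INR _) H r0; lra.
Qed.
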